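(* In the setting of the context, consider the two families of linear inequalities $$x_t-x_{t-k}\le(\underline C+(k-m)V)y_t+V\sum_{i=1}^m y_{t+i}-\underline C y_{t-k}-\sum_{s\in\mathcal S}(\underline C+(k-s)V-\overline V)(y_{t-s}-y_{t-s-1}),$$ indexed by all $k\in[1,T-1]_{\mathbb Z}$ with $\overline C-\underline C-kV>0$, $m\in[0,k-1]_{\mathbb Z}$, $\mathcal S\subseteq[0,\min\{k-1,L-m-1\}]_{\mathbb Z}$ and $t\in[k+1,T-m]_{\mathbb Z}$, and $$x_t-x_{t+k}\le(\underline C+(k-m)V)y_t+V\sum_{i=1}^m y_{t-i}-\underline C y_{t+k}-\sum_{s\in\mathcal S}(\underline C+(k-s)V-\overline V)(y_{t+s}-y_{t+s+1}),$$ indexed by the same $k,m,\mathcal S$ and $t\in[m+1,T-k]_{\mathbb Z}$. For any given point $(\mathbf x,\mathbf y)\in\mathbb R_+^{2T}$, a most violated inequality of each family can be determined in $O(T^3)$ time if a violated inequality of that family exists.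
   Context: For integers $a,b$, $[a,b]_{\mathbb Z}=\{a,a+1,\dots,b\}$ if $a\le b$ and $\emptyset$ otherwise. Fix a positive integer $T$, a positive integer $L$ (minimum up time), and reals $\overline C,\underline C,V,\overline V$ with $\overline C>\underline C>0$, $V>0$, $\overline V+V\le\overline C$ and $\underline C<\overline V<\underline C+V$; $\mathbf x=(x_1,\dots,x_T)$, $\mathbf y=(y_1,\dots,y_T)$. For an inequality $a^\top(\mathbf x,\mathbf y)\le b$, its violation at a given point is $a^\top(\mathbf x,\mathbf y)-b$; it is violated if this is positive, and a most violated inequality of a family is one maximizing this quantity over the family. Time is measured in arithmetic operations and comparisons on the input numbers. *)

(* Defs.v *)
From HB Require Import structures.
From mathcomp Require Import all_boot all_order all_algebra.
Set Implicit Arguments. Unset Strict Implicit. Unset Printing Implicit Defensive.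
Import Order.TTheory GRing.Theory Num.Theory.
Local Open Scope ring_scope.

(* An index is (k, m, Ss, t); the subset S is given by a duplicate-free  *)
(* sequence of naturals.                                                *)
Definition ineq_index := (nat * nat * seq nat * nat)%type.


(* k in [1,T-1], Cbar - Cund - kV > 0, m in [0,k-1],
   S subset of [0, min(k-1, L-m-1)] (integer interval, empty if L-m-1<0),
   plus the family-specific range for t. *)
Definition valid_kmS (R : realFieldType) (T L : nat) (Cbar Cund V Vbar : R) (k m : nat) (Ss : seq nat) : bool :=
  [&& (1 <= k)%N, (k <= T - 1)%N, 0 < Cbar - Cund - k%:R * V, (m <= k - 1)%N,
      uniq Ss & all (fun s => (s <= k - 1)%N && (s + m + 1 <= L)%N) Ss].

Definition valid1 (R : realFieldType) (T L : nat) (Cbar Cund V Vbar : R) (i : ineq_index) : bool :=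
  let: (k, m, Ss, t) := i in valid_kmS T L Cbar Cund V Vbar k m Ss && (k + 1 <= t <= T - m)%N.

Definition valid2 (R : realFieldType) (T L : nat) (Cbar Cund V Vbar : R) (i : ineq_index) : bool :=
  let: (k, m, Ss, t) := i in valid_kmS T L Cbar Cund V Vbar k m Ss && (m + 1 <= t <= T - k)%N.

Definition viol1 (R : realFieldType) (Cund V Vbar : R) (x y : nat -> R) (i : ineq_index) : R :=
  let: (k, m, Ss, t) := i in
  (x t - x (t - k)%N) -
  ((Cund + (k%:R - m%:R) * V) * y t + V * (\sum_(1 <= j < m.+1) y (t + j)%N)
   - Cund * y (t - k)%N
   - \sum_(s <- Ss) (Cund + (k%:R - s%:R) * V - Vbar) *
                     (y (t - s)%N - y (t - s - 1)%N)).

Definition viol2 (R : realFieldType) (Cund V Vbar : R) (x y : nat -> R) (i : ineq_index) : R :=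
  let: (k, m, Ss, t) := i in
  (x t - x (t + k)%N) -
  ((Cund + (k%:R - m%:R) * V) * y t + V * (\sum_(1 <= j < m.+1) y (t - j)%N)
   - Cund * y (t + k)%N
   - \sum_(s <- Ss) (Cund + (k%:R - s%:R) * V - Vbar) *
                     (y (t + s)%N - y (t + s + 1)%N)).

(* Model of computation: algorithms may manipulate the input numbers  *)
(* only through abstract operations (arithmetic and comparisons), in   *)
(* an abstract monad.  Each such operation costs one unit; control    *)
(* flow on indices (naturals) is free.                                 *)
Record Ops (M : Type -> Type) (N : Type) := {
  op_ret  : forall A : Type, A -> M A;
  op_bind : forall A B : Type, M A -> (A -> M B) -> M B;
  op_add  : N -> N -> M N;
  op_sub  : N -> N -> M N;
  op_mul  : N -> N -> M N;
  op_div  : N -> N -> M N;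
  op_nat  : nat -> M N;
  op_le   : N -> N -> M bool;
  op_lt   : N -> N -> M bool
}.

Definition algorithm : Type :=
  forall (M : Type -> Type) (N : Type), Ops M N ->
    nat -> nat -> N -> N -> N -> N -> (nat -> N) -> (nat -> N) ->
    M (option ineq_index).

Definition CM (A : Type) : Type := (A * nat)%type.

Definition count_ops (R : realFieldType) : Ops CM R := {|
  op_ret  := fun A a => (a, 0%N);
  op_bind := fun A B m f => let: (a, c) := m in let: (b, c') := f a in (b, (c + c')%N);
  op_add  := fun a b => (a + b, 1%N);
  op_sub  := fun a b => (a - b, 1%N);
  op_mul  := fun a b => (a * b, 1%N);
  op_div  := fun a b => (a / b, 1%N);
  op_nat  := fun n => (n%:R, 1%N);
  op_le   := fun a b => (a <= b, 1%N);
  op_lt   := fun a b => (a < b, 1%N)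
|}.

Definition run (R : realFieldType) (alg : algorithm) (T L : nat)
  (Cbar Cund V Vbar : R) (x y : nat -> R) : option ineq_index * nat :=
  alg CM R (count_ops R) T L Cbar Cund V Vbar x y.

Definition params_ok (R : realFieldType) (T L : nat) (Cbar Cund V Vbar : R) : Prop :=
  [/\ (0 < T)%N, (0 < L)%N, Cund < Cbar, 0 < Cund & 0 < V] /\
  [/\ Vbar + V <= Cbar, Cund < Vbar & Vbar < Cund + V].

Definition separates_in_cubic_time (alg : algorithm)
  (valid : forall R : realFieldType, nat -> nat -> R -> R -> R -> R -> ineq_index -> bool)
  (viol : forall R : realFieldType, R -> R -> R -> (nat -> R) -> (nat -> R) -> ineq_index -> R)
  : Prop :=
  exists c : nat,
  forall (R : realFieldType) (T L : nat) (Cbar Cund V Vbar : R) (x y : nat -> R),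
    params_ok T L Cbar Cund V Vbar ->
    (forall i, (1 <= i <= T)%N -> 0 <= x i /\ 0 <= y i) ->
    let res := run alg T L Cbar Cund V Vbar x y in
    (res.2 <= c * T ^ 3)%N /\
    ((exists j, valid R T L Cbar Cund V Vbar j &&
                (0 < viol R Cund V Vbar x y j)) ->
     exists i, res.1 = Some i /\ valid R T L Cbar Cund V Vbar i /\
       forall j, valid R T L Cbar Cund V Vbar j ->
         viol R Cund V Vbar x y j <= viol R Cund V Vbar x y i).

(* Main.v *)
Require Import Defs.
From HB Require Import structures.
From mathcomp Require Import all_boot all_order all_algebra.
From mathcomp Require Import zify lra.
Set Implicit Arguments. Unset Strict Implicit. Unset Printing Implicit Defensive.
Import Order.TTheory GRing.Theory Num.Theory.
Local Open Scope ring_scope.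

Fixpoint mapM M N (O : Ops M N) A B (f : A -> M B) (l : seq A) : M (seq B) :=
  match l with
  | [::] => op_ret O [::]
  | a :: l' => op_bind O (f a) (fun b => op_bind O (mapM O f l') (fun r => op_ret O (b :: r)))
  end.

Fixpoint scanM M N (O : Ops M N) S A (step : S -> A -> M S) (acc : S) (l : seq A) : M (seq S) :=
  match l with
  | [::] => op_ret O [:: acc]
  | a :: l' => op_bind O (step acc a) (fun acc' => op_bind O (scanM O step acc' l') (fun r => op_ret O (acc :: r)))
  end.

Fixpoint argmaxM M N (O : Ops M N) I (best : option (I * N)) (l : seq (I * N)) : M (option (I * N)) :=
  match l with
  | [::] => op_ret O best
  | (i, v) :: l' =>
    match best with
    | None => argmaxM O (Some (i, v)) l'
    | Some (j, w) => op_bind O (op_lt O w v) (fun b => argmaxM O (if b then Some (i, v) else Some (j, w)) l')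
    end
  end.

Section CMlemmas.
Variable R : realFieldType.
Local Notation O := (count_ops R).

Lemma bind_CM A B (m : CM A) (f : A -> CM B) :
  op_bind O m f = ((f m.1).1, (m.2 + (f m.1).2)%N).
Proof. by case: m => a c /=; case: (f a). Qed.

Lemma ret_CM A (a : A) : op_ret O a = (a, 0%N).
Proof. by []. Qed.

Lemma mapM_CM A B (f : A -> CM B) l :
  mapM O f l = (map (fun a => (f a).1) l, sumn (map (fun a => (f a).2) l)).
Proof.
elim: l => [|a l IH] //=; rewrite IH; case: (f a) => b c /=.
by rewrite addn0.
Qed.

Lemma mapM_cost (A : eqType) B (f : A -> CM B) l c :
  (forall a, a \in l -> ((f a).2 <= c)%N) -> ((mapM O f l).2 <= size l * c)%N.
Proof.
rewrite mapM_CM /=; elim: l => [|a l IH] Hc //=.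
rewrite mulSn leq_add //; first by apply: Hc; rewrite inE eqxx.
by apply: IH => b Hb; apply: Hc; rewrite inE Hb orbT.
Qed.

Lemma scanM_val A (step : R -> A -> CM R) (f : A -> R) z l i d :
  (forall acc a, (step acc a).1 = acc + f a) -> (i <= size l)%N ->
  nth d (scanM O step z l).1 i = z + \sum_(a <- take i l) f a.
Proof.
move=> Hs; elim: l z i => [|a l IH] z i /=.
  by rewrite leqn0 => /eqP ->; rewrite big_nil addr0.
case E: (step z a) => [z' c] /=.
case E2: (scanM O step z' l) => [r c'] /=.
case: i => [|i] Hi /=; first by rewrite big_nil addr0.
have := IH z' i Hi; rewrite E2 /= => ->.
by rewrite big_cons addrA -(Hs z a) E.
Qed.

Lemma scanM_cost S A (step : S -> A -> CM S) z l c :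
  (forall acc a, ((step acc a).2 <= c)%N) ->
  ((scanM O step z l).2 <= size l * c)%N.
Proof.
move=> Hc; elim: l z => [|a l IH] z //=.
have := Hc z a; case: (step z a) => [z' c1] /= H1.
have := IH z'; case: (scanM O step z' l) => [r c2] /= H2.
by rewrite addn0 mulSn leq_add.
Qed.

Lemma argmax_spec (I : eqType) (best : option (I * R)) (l : seq (I * R)) :
  match (argmaxM O best l).1 with
  | None => best = None /\ l = [::]
  | Some p => p \in (if best is Some b then b :: l else l) /\
      (forall q, q \in l -> q.2 <= p.2) /\ (forall b, best = Some b -> b.2 <= p.2)
  end.
Proof.
elim: l best => [|[i v] l IH] best.
  case: best => [b|] //=; split; first by rewrite inE.
  by split=> // b' [<-].
case: best => [[j w]|].
  change (argmaxM O (Some (j,w)) ((i,v)::l)) with (op_bind O (op_lt O w v) (fun b => argmaxM O (if b then Some (i,v) else Some (j,w)) l)).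
  rewrite bind_CM /=.
  case Hc: (w < v).
    have := IH (Some (i, v)); case: (argmaxM O _ l).1 => [p|]; last by case.
    move=> [Hp [Hl Hb]]; have Hv := Hb _ erefl.
    have Hw : w <= p.2 by apply: le_trans Hv; apply: ltW.
    split; first by move: Hp; rewrite !inE => /orP [->|->]; rewrite ?orbT.
    split; last by move=> b [<-].
    by move=> q; rewrite inE => /orP [/eqP ->|]; [ | exact: Hl].
  have := IH (Some (j, w)); case: (argmaxM O _ l).1 => [p|]; last by case.
  move=> [Hp [Hl Hb]]; have Hw := Hb _ erefl.
  have Hv : v <= p.2 by apply: le_trans Hw; rewrite leNgt Hc.
  split; first by move: Hp; rewrite !inE => /orP [->|->]; rewrite ?orbT.
  split; last by move=> b [<-].
  by move=> q; rewrite inE => /orP [/eqP ->|]; [ | exact: Hl].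
have := IH (Some (i, v)); case: (argmaxM O (Some (i, v)) l).1 => [p|]; last by case.
move=> [Hp [Hl Hb]]; split => //; split => //.
move=> q; rewrite inE => /orP [/eqP ->|]; [exact: Hb | exact: Hl].
Qed.

Lemma argmax_cost (I : Type) (best : option (I * R)) (l : seq (I * R)) :
  ((argmaxM O best l).2 <= size l)%N.
Proof.
elim: l best => [|[i v] l IH] best //.
case: best => [[j w]|]; last by apply: leqW; apply: IH.
change (argmaxM O (Some (j,w)) ((i,v)::l)) with (op_bind O (op_lt O w v) (fun b => argmaxM O (if b then Some (i,v) else Some (j,w)) l)).
by rewrite bind_CM /= add1n ltnS.
Qed.

End CMlemmas.

Section Alg.
Variables (M : Type -> Type) (N : Type) (O : Ops M N).
Variables (T L : nat) (Cbar Cund V Vbar : N) (x y : nat -> N).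

Definition coefM (k s : nat) : M N :=
  op_bind O (op_nat O k) (fun kn => op_bind O (op_nat O s) (fun sn =>
  op_bind O (op_sub O kn sn) (fun a => op_bind O (op_mul O a V) (fun b =>
  op_bind O (op_add O Cund b) (fun c => op_sub O c Vbar))))).

Definition Fstep (P : nat -> bool) (t k : nat) (acc : N) (s : nat) : M N :=
  if P (t - s)%N then
    op_bind O (coefM k s) (fun c =>
    op_bind O (op_sub O (y (t - s)%N) (y (t - s - 1)%N)) (fun d =>
    op_bind O (op_mul O c d) (fun g => op_add O acc g)))
  else op_ret O acc.

Definition valM (k m t : nat) (Ysum Ssum : N) : M N :=
  op_bind O (op_nat O k) (fun kn => op_bind O (op_nat O m) (fun mn =>
  op_bind O (op_sub O kn mn) (fun a => op_bind O (op_mul O a V) (fun b =>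
  op_bind O (op_add O Cund b) (fun c => op_bind O (op_mul O c (y t)) (fun e =>
  op_bind O (op_mul O V Ysum) (fun f => op_bind O (op_add O e f) (fun g =>
  op_bind O (op_mul O Cund (y (t - k)%N)) (fun h => op_bind O (op_sub O g h) (fun i =>
  op_bind O (op_sub O i Ssum) (fun j => op_bind O (op_sub O (x t) (x (t - k)%N)) (fun l =>
  op_sub O l j)))))))))))).

Definition okM (zero : N) (k : nat) : M bool :=
  op_bind O (op_nat O k) (fun kn => op_bind O (op_mul O kn V) (fun a =>
  op_bind O (op_sub O Cbar Cund) (fun b => op_bind O (op_sub O b a) (fun c =>
  op_lt O zero c)))).

Definition Sstar (P : nat -> bool) (t n : nat) : seq nat := [seq s <- iota 0 n | P (t - s)%N].

Definition candsT (P ok : nat -> bool) (zero : N) (t : nat) : M (seq (seq (ineq_index * N))) :=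
  op_bind O (scanM O (fun acc j => op_add O acc (y (t + j)%N)) zero (iota 1 T)) (fun Ys =>
  mapM O (fun k =>
    op_bind O (scanM O (Fstep P t k) zero (iota 0 k)) (fun Fs =>
    mapM O (fun m =>
      op_bind O (valM k m t (nth zero Ys m) (nth zero Fs (minn k (L - m))))
        (fun v => op_ret O ((k, m, Sstar P t (minn k (L - m)), t), v)))
      [seq m <- iota 0 k | (t <= T - m)%N]))
    [seq k <- iota 1 (T - 1) | ok k && (k + 1 <= t)%N]).

Definition alg1_body : M (option ineq_index) :=
  op_bind O (op_nat O 0) (fun zero =>
  op_bind O (mapM O (fun u => op_lt O (y (u - 1)%N) (y u)) (iota 0 T.+1)) (fun posl =>
  op_bind O (mapM O (okM zero) (iota 0 T)) (fun okl =>
  op_bind O (mapM O (candsT (fun u => nth false posl u) (fun k => nth false okl k) zero) (iota 0 T.+1)) (fun cands =>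
  op_bind O (argmaxM O None (flatten (flatten cands))) (fun best =>
  op_ret O (omap fst best)))))).
End Alg.

Definition alg1 : algorithm := fun M N O T L Cbar Cund V Vbar x y => alg1_body O T L Cbar Cund V Vbar x y.

Section Proofs.
Variable R : realFieldType.
Local Notation O := (count_ops R).
Variables (T L : nat) (Cbar Cund V Vbar : R) (x y : nat -> R).

Lemma coef_CM k s : coefM O Cund V Vbar k s = (Cund + (k%:R - s%:R) * V - Vbar, 6%N).
Proof. by []. Qed.

Lemma valM_CM k m t Ys Ss : valM O Cund V x y k m t Ys Ss =
  ((x t - x (t - k)%N) - ((Cund + (k%:R - m%:R) * V) * y t + V * Ys - Cund * y (t - k)%N - Ss), 13%N).
Proof. by []. Qed.

Lemma okM_CM z k : okM O Cbar Cund V z k = (z < Cbar - Cund - k%:R * V, 5%N).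
Proof. by []. Qed.


Arguments mapM : simpl never.
Arguments scanM : simpl never.
Arguments argmaxM : simpl never.

Lemma mapM_CM1 A B (f : A -> CM B) l : (mapM O f l).1 = map (fun a => (f a).1) l.
Proof. by rewrite mapM_CM. Qed.
Lemma bind_CM1 A B (m : CM A) (f : A -> CM B) : (op_bind O m f).1 = (f m.1).1.
Proof. by rewrite bind_CM. Qed.

Definition gco (k t s : nat) : R :=
  (Cund + (k%:R - s%:R) * V - Vbar) * (y (t - s)%N - y (t - s - 1)%N).

Lemma Fstep_val P t k acc s :
  (Fstep O Cund V Vbar y P t k acc s).1 = acc + (if P (t - s)%N then gco k t s else 0).
Proof. by rewrite /Fstep; case: (P (t - s)%N) => //=; rewrite addr0. Qed.

Lemma Fstep_cost P t k acc s : ((Fstep O Cund V Vbar y P t k acc s).2 <= 9)%N.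
Proof. by rewrite /Fstep; case: (P (t - s)%N). Qed.

Lemma Ys_val t m : (m <= T)%N ->
  nth 0 (scanM O (fun acc j => op_add O acc (y (t + j)%N)) 0 (iota 1 T)).1 m
  = \sum_(1 <= j < m.+1) y (t + j)%N.
Proof.
move=> Hm; rewrite (@scanM_val R nat _ (fun j => y (t + j)%N)) //; last by rewrite size_iota.
by rewrite add0r take_iota (minn_idPl Hm) /index_iota subn1.
Qed.

Lemma Fs_val P t k n : (n <= k)%N ->
  nth 0 (scanM O (Fstep O Cund V Vbar y P t k) 0 (iota 0 k)).1 n
  = \sum_(s <- Sstar P t n) gco k t s.
Proof.
move=> Hn; rewrite (@scanM_val R nat _ (fun s => if P (t - s)%N then gco k t s else 0));
  [ | by move=> acc a; apply: Fstep_val | by rewrite size_iota].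
by rewrite add0r take_iota (minn_idPl Hn) /Sstar big_filter [RHS]big_mkcond.
Qed.

Definition viol1R := viol1 Cund V Vbar x y.

Lemma candsT_mem P ok t e :
  e \in flatten (candsT O T L Cund V Vbar x y P ok 0 t).1 <->
  exists k m, [/\ k \in [seq k <- iota 1 (T - 1) | ok k && (k + 1 <= t)%N],
     m \in [seq m <- iota 0 k | (t <= T - m)%N] &
     e = ((k, m, Sstar P t (minn k (L - m)), t),
          viol1R (k, m, Sstar P t (minn k (L - m)), t))].
Proof.
rewrite /candsT bind_CM1; cbv beta; rewrite mapM_CM1.
have Hv : forall k m, k \in [seq k <- iota 1 (T - 1) | ok k && (k + 1 <= t)%N] ->
     m \in [seq m <- iota 0 k | (t <= T - m)%N] ->
   (op_bind O (valM O Cund V x y k m t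
            (nth 0 (scanM O (fun acc j => op_add O acc (y (t + j)%N)) 0 (iota 1 T)).1 m)
            (nth 0 (scanM O (Fstep O Cund V Vbar y P t k) 0 (iota 0 k)).1 (minn k (L - m))))
      (fun v => op_ret O ((k, m, Sstar P t (minn k (L - m)), t), v))).1 =
   ((k, m, Sstar P t (minn k (L - m)), t), viol1R (k, m, Sstar P t (minn k (L - m)), t)).
  move=> k m Hk Hm; rewrite bind_CM1 valM_CM /=.
  move: Hk Hm; rewrite !mem_filter !mem_iota => /andP [_ /andP [Hk1 Hk2]] /andP [_ /andP [_ Hm2]].
  rewrite Ys_val; last by lia.
  by rewrite Fs_val // geq_minl.
split.
  move/flatten_mapP => [k Hk]; rewrite bind_CM1; cbv beta; rewrite mapM_CM1.
  move/mapP => [m Hm ->]; exists k, m; split => //.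
  exact: Hv.
move=> [k [m [Hk Hm ->]]]; apply/flatten_mapP; exists k => //.
rewrite bind_CM1; cbv beta; rewrite mapM_CM1; apply/mapP; exists m => //.
by rewrite Hv.
Qed.


Definition P0 (u : nat) : bool := y (u - 1)%N < y u.

Lemma coef_pos k s : 0 < V -> Vbar < Cund + V -> (s < k)%N ->
  0 < Cund + (k%:R - s%:R) * V - Vbar.
Proof.
move=> HV Hb Hsk.
have H1 : 1 <= k%:R - s%:R :> R.
  by rewrite lerBrDr addrC natr1 ler_nat.
nra.
Qed.

Lemma greedy_opt k m Ss t : 0 < V -> Vbar < Cund + V ->
  valid1 T L Cbar Cund V Vbar (k, m, Ss, t) ->
  viol1R (k, m, Ss, t) <= viol1R (k, m, Sstar P0 t (minn k (L - m)), t).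
Proof.
move=> HV Hb /andP [/andP [Hk1 /andP [Hk2 /andP [Hpos /andP [Hm /andP [Huniq Hall]]]]] Ht].
set n := minn k (L - m).
set h := fun s => if P0 (t - s)%N then gco k t s else 0.
have Hsn : forall s, s \in Ss -> (s < n)%N.
  move=> s Hs; move/allP: Hall => /(_ s Hs) /andP [H1 H2].
  rewrite /n; lia.
have Hnk : (n <= k)%N by rewrite /n geq_minl.
have Hgh : forall s, (s < k)%N -> gco k t s <= h s.
  move=> s Hs; rewrite /h /gco /P0; case: ifP => // /negbT; rewrite -leNgt => Hd.
  apply: mulr_ge0_le0; first by apply: ltW; apply: coef_pos.
  by rewrite subr_le0.
have Hh0 : forall s, (s < k)%N -> 0 <= h s.
  move=> s Hs; rewrite /h /gco /P0; case: ifP => // Hd.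
  apply: mulr_ge0; first by apply: ltW; apply: coef_pos.
  by rewrite subr_ge0 ltW.
have key : \sum_(s <- Ss) gco k t s <= \sum_(s <- Sstar P0 t n) gco k t s.
  apply: (@le_trans _ _ (\sum_(s <- Ss) h s)).
    rewrite big_seq [X in _ <= X]big_seq; apply: ler_sum => s Hs.
    by apply: Hgh; apply: leq_trans (Hsn s Hs) Hnk.
  have Hperm : perm_eq Ss [seq s <- iota 0 n | s \in Ss].
    apply: uniq_perm => //; first by apply: filter_uniq; apply: iota_uniq.
    move=> s; rewrite mem_filter mem_iota add0n.
    by case Hs: (s \in Ss); rewrite ?andbT ?andbF // Hsn.
  rewrite (perm_big _ Hperm) /= big_filter.
  rewrite /Sstar big_filter [X in _ <= X]big_mkcond [X in X <= _]big_mkcond /= -/h.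
  rewrite big_seq [X in _ <= X]big_seq; apply: ler_sum => s.
  rewrite mem_iota add0n => /andP [_ Hs].
  case: ifP => _; first by [].
  by apply: Hh0; apply: leq_trans Hs Hnk.
move: key; rewrite /gco /viol1R /viol1 => key.
lra.
Qed.



Lemma size_flatten_le (X : eqType) (l : seq (seq X)) c :
  (forall s, s \in l -> (size s <= c)%N) -> (size (flatten l) <= size l * c)%N.
Proof.
elim: l => [|a l IH] H //=; rewrite size_cat mulSn leq_add //.
  by apply: H; rewrite inE eqxx.
by apply: IH => s Hs; apply: H; rewrite inE Hs orbT.
Qed.

Lemma candsT_cost P ok t :
  ((candsT O T L Cund V Vbar x y P ok 0%R t).2 <= T * 1 + T * (T * 9 + T * 13))%N.
Proof.
rewrite /candsT bind_CM; apply: leq_add.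
  by rewrite -{2}(size_iota 1 T); apply: scanM_cost.
apply: leq_trans (mapM_cost (c := (T * 9 + T * 13)%N) _ _) _.
  move=> k; rewrite mem_filter mem_iota => /andP [_ /andP [_ Hk]].
  rewrite bind_CM; apply: leq_add.
    apply: leq_trans (scanM_cost _ _ _ (c := 9%N) _) _; first by move=> *; apply: Fstep_cost.
    by rewrite size_iota leq_mul2r; apply/orP; right; lia.
  apply: leq_trans (mapM_cost (c := 13%N) _ _) _.
    by move=> m _; rewrite bind_CM valM_CM.
  rewrite leq_mul2r; apply/orP; right.
  by rewrite size_filter; apply: leq_trans (count_size _ _) _; rewrite size_iota; lia.
rewrite leq_mul2r; apply/orP; right.
by rewrite size_filter; apply: leq_trans (count_size _ _) _; rewrite size_iota; lia.
Qed.

Lemma candsT_size1 P ok t : (size (candsT O T L Cund V Vbar x y P ok 0%R t).1 <= T)%N.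
Proof.
rewrite /candsT bind_CM1 mapM_CM1 size_map size_filter.
by apply: leq_trans (count_size _ _) _; rewrite size_iota; lia.
Qed.

Lemma candsT_size2 P ok t s : s \in (candsT O T L Cund V Vbar x y P ok 0%R t).1 -> (size s <= T)%N.
Proof.
rewrite /candsT bind_CM1 mapM_CM1 => /mapP [k Hk ->].
rewrite bind_CM1 mapM_CM1 size_map size_filter.
apply: leq_trans (count_size _ _) _; rewrite size_iota.
by move: Hk; rewrite mem_filter mem_iota => /andP [_ /andP [_ Hk]]; lia.
Qed.

Lemma alg1_main : (0 < T)%N -> 0 < V -> Vbar < Cund + V ->
 let res := alg1_body O T L Cbar Cund V Vbar x y in
 (res.2 <= 100 * T ^ 3)%N /\
 ((exists j, valid1 T L Cbar Cund V Vbar j && (0 < viol1 Cund V Vbar x y j)) ->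
   exists i, res.1 = Some i /\ valid1 T L Cbar Cund V Vbar i /\
     forall j, valid1 T L Cbar Cund V Vbar j -> viol1 Cund V Vbar x y j <= viol1 Cund V Vbar x y i).
Proof.
move=> HT HV Hb; rewrite /alg1_body.
do 5 (rewrite bind_CM; cbv beta).
have -> : (op_nat O 0).1 = 0 by [].
set PL := mapM O (fun u => op_lt O _ _) (iota 0 T.+1).
set OK := mapM O (okM O Cbar Cund V 0) (iota 0 T).
set CA := mapM O (candsT O T L Cund V Vbar x y _ _ 0) (iota 0 T.+1).
set AM := argmaxM O None _.
rewrite /=.
have HPL : forall u, (u <= T)%N -> nth false PL.1 u = P0 u.
  by move=> u Hu; rewrite /PL mapM_CM1 (nth_map 0%N) ?size_iota // nth_iota.
have HOK : forall k, (k < T)%N -> nth false OK.1 k = (0 < Cbar - Cund - k%:R * V).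
  by move=> k Hk; rewrite /OK mapM_CM1 (nth_map 0%N) ?size_iota // nth_iota // okM_CM.
have HCA : CA.1 = map (fun t => (candsT O T L Cund V Vbar x y [eta nth false PL.1] [eta nth false OK.1] 0 t).1) (iota 0 T.+1).
  by rewrite /CA mapM_CM1.
set CL := flatten (flatten CA.1).
split.
  have C1 : (PL.2 <= T.+1 * 1)%N.
    by apply: leq_trans (mapM_cost (c := 1%N) _ _) _; rewrite ?size_iota.
  have C2 : (OK.2 <= T * 5)%N.
    by apply: leq_trans (mapM_cost (c := 5%N) _ _) _; [move=> k _; rewrite okM_CM | rewrite size_iota].
  have C3 : (CA.2 <= T.+1 * (T * 1 + T * (T * 9 + T * 13)))%N.
    apply: leq_trans (mapM_cost (c := (T * 1 + T * (T * 9 + T * 13))%N) _ _) _; last by rewrite size_iota.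
    by move=> t _; apply: candsT_cost.
  have C4 : (AM.2 <= T.+1 * T * T)%N.
    apply: leq_trans (argmax_cost _ _) _.
    apply: leq_trans (size_flatten_le (c := T) _) _.
      move=> s /flattenP [s' Hs' Hs]; move: Hs'; rewrite HCA => /mapP [t _ Ht].
      by move: Hs; rewrite Ht; apply: candsT_size2.
    rewrite leq_mul2r; apply/orP; right.
    apply: leq_trans (size_flatten_le (c := T) _) _.
      by move=> s; rewrite HCA => /mapP [t _ ->]; apply: candsT_size1.
    by rewrite HCA size_map size_iota.
  have HT3 : (T ^ 3 = T * T * T)%N by rewrite !expnS expn0 muln1 mulnA.
  rewrite HT3; nia.
set Pf := [eta nth false PL.1].
have HSs : forall t n, (t <= T)%N -> Sstar Pf t n = Sstar P0 t n.
  move=> t n Ht; rewrite /Sstar; apply: eq_filter => s; rewrite /Pf /= HPL //; lia.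
have HCLa : forall e, e \in CL -> valid1 T L Cbar Cund V Vbar e.1 /\ e.2 = viol1R e.1.
  move=> e /flattenP [s Hs He]; move: Hs; rewrite HCA => /flatten_mapP [t Ht Hs].
  have : e \in flatten (candsT O T L Cund V Vbar x y Pf [eta nth false OK.1] 0 t).1.
    by apply/flattenP; exists s.
  move/candsT_mem => [k [m [Hk Hm ->]]]; split => //=.
  move: Hk Hm; rewrite !mem_filter !mem_iota /= => /and3P [/andP [Hok Hkt] Hk1 Hk2] /andP [HTm Hm2].
  rewrite HOK in Hok; last by lia.
  apply/and3P; split; [ | lia | lia].
  rewrite /valid_kmS Hok Hk1 /=.
  apply/andP; split; first by lia.
  apply/andP; split; first by lia.
  apply/andP; split; first by rewrite /Sstar filter_uniq // iota_uniq.
  apply/allP => s0; rewrite /Sstar mem_filter mem_iota => /andP [_ Hs0].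
  apply/andP; split; lia.
have HCLb : forall j, valid1 T L Cbar Cund V Vbar j -> exists2 e, e \in CL & viol1R j <= e.2.
  move=> [[[k m] Ss] t] Hv.
  have Hv' := Hv; move: Hv' => /andP [/andP [Hk1 /andP [Hk2 /andP [Hpos /andP [Hm _]]]] Ht].
  exists ((k, m, Sstar Pf t (minn k (L - m)), t), viol1R (k, m, Sstar Pf t (minn k (L - m)), t)).
    have : ((k, m, Sstar Pf t (minn k (L - m)), t), viol1R (k, m, Sstar Pf t (minn k (L - m)), t))
       \in flatten (candsT O T L Cund V Vbar x y Pf [eta nth false OK.1] 0 t).1.
      apply/candsT_mem; exists k, m; split => //.
        rewrite mem_filter mem_iota /= HOK; last by lia.
        rewrite Hpos /=; apply/andP; split; lia.
      rewrite mem_filter mem_iota; apply/andP; split; lia.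
    move/flattenP => [s Hs He]; apply/flattenP; exists s => //.
    rewrite HCA; apply/flatten_mapP; exists t => //; rewrite mem_iota; lia.
  rewrite /= HSs; last by lia.
  by apply: greedy_opt.
move=> [j0 /andP [Hj0 _]].
have -> : AM.1 = (argmaxM O None CL).1 by [].
have := argmax_spec None CL; case: (argmaxM O None CL).1 => [p|]; last first.
  by move=> [_ HCL]; have [e He _] := HCLb _ Hj0; rewrite HCL in He.
move=> [Hp [Hmax _]]; exists p.1; split => //.
have [Hpv Hpe] := HCLa _ Hp; split => // j Hj.
have [e He Hje] := HCLb _ Hj.
apply: le_trans Hje _; rewrite -/(viol1R p.1) -Hpe.
exact: Hmax.
Qed.

End Proofs.

Definition reflt (T : nat) (i : ineq_index) : ineq_index :=
  let: (k, m, Ss, t) := i in (k, m, Ss, (T.+1 - t)%N).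

Definition alg2 : algorithm := fun M N O T L Cbar Cund V Vbar x y =>
  op_bind O (alg1_body O T L Cbar Cund V Vbar (fun u => x (T.+1 - u)%N) (fun u => y (T.+1 - u)%N))
    (fun r => op_ret O (omap (reflt T) r)).

Section Proofs2.
Variable R : realFieldType.
Variables (T L : nat) (Cbar Cund V Vbar : R) (x y : nat -> R).
Let x' := fun u => x (T.+1 - u)%N.
Let y' := fun u => y (T.+1 - u)%N.

Lemma refl_valid i : valid2 T L Cbar Cund V Vbar i = valid1 T L Cbar Cund V Vbar (reflt T i).
Proof.
case: i => [[[k m] Ss] t] /=.
case E: (valid_kmS T L Cbar Cund V Vbar k m Ss) => //=.
move: E => /andP [Hk1 /andP [Hk2 /andP [_ /andP [Hm _]]]].
by apply/idP/idP => /andP [h1 h2]; apply/andP; split; lia.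
Qed.

Lemma reflt_inv i : (i.2 <= T)%N -> reflt T (reflt T i) = i.
Proof. by case: i => [[[k m] Ss] t] /= Ht; congr (_, _, _, _); lia. Qed.

Lemma refl_viol i : valid2 T L Cbar Cund V Vbar i ->
  viol2 Cund V Vbar x y i = viol1 Cund V Vbar x' y' (reflt T i).
Proof.
case: i => [[[k m] Ss] t] /andP [/andP [Hk1 /andP [Hk2 /andP [_ /andP [Hm /andP [_ Hall]]]]] Ht].
rewrite /viol1 /viol2 /x' /y' /=.
have e1 : (T.+1 - (T.+1 - t) = t)%N by lia.
have e2 : (T.+1 - (T.+1 - t - k) = t + k)%N by lia.
rewrite e1 e2.
have -> : \sum_(1 <= j < m.+1) y (T.+1 - (T.+1 - t + j))%N = \sum_(1 <= j < m.+1) y (t - j)%N.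
  by apply: eq_big_nat => j Hj; congr y; lia.
have -> : \sum_(s <- Ss) (Cund + (k%:R - s%:R) * V - Vbar) * (y (T.+1 - (T.+1 - t - s))%N - y (T.+1 - (T.+1 - t - s - 1))%N)
   = \sum_(s <- Ss) (Cund + (k%:R - s%:R) * V - Vbar) * (y (t + s)%N - y (t + s + 1)%N).
  apply: eq_big_seq => s Hs; move/allP: Hall => /(_ s Hs) /andP [h1 h2].
  congr (_ * (y _ - y _)); lia.
by [].
Qed.

Lemma alg2_main : (0 < T)%N -> 0 < V -> Vbar < Cund + V ->
 let res := alg2 (count_ops R) T L Cbar Cund V Vbar x y in
 (res.2 <= 100 * T ^ 3)%N /\
 ((exists j, valid2 T L Cbar Cund V Vbar j && (0 < viol2 Cund V Vbar x y j)) ->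
   exists i, res.1 = Some i /\ valid2 T L Cbar Cund V Vbar i /\
     forall j, valid2 T L Cbar Cund V Vbar j -> viol2 Cund V Vbar x y j <= viol2 Cund V Vbar x y i).
Proof.
move=> HT HV Hb; rewrite /alg2 bind_CM /=.
have [C1 C2] := alg1_main L Cbar x' y' HT HV Hb.
split; first by rewrite addn0.
move=> [j /andP [Hj Hpos]].
have Hex : exists j0, valid1 T L Cbar Cund V Vbar j0 && (0 < viol1 Cund V Vbar x' y' j0).
  by exists (reflt T j); rewrite -refl_valid Hj /= -refl_viol.
have [i [Hi [Hiv Himax]]] := C2 Hex.
have HiT : (i.2 <= T)%N.
  by move: Hiv; case: i {Hi Himax} => [[[k m] Ss] t] /andP [_ /andP [_ h]] /=; lia.
exists (reflt T i); rewrite Hi; split => //.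
have Hv2 : valid2 T L Cbar Cund V Vbar (reflt T i) by rewrite refl_valid reflt_inv.
split => // j' Hj'.
rewrite !refl_viol // reflt_inv //.
by apply: Himax; rewrite -refl_valid.
Qed.
End Proofs2.

Theorem proposition10 :
  (exists alg : algorithm,
     separates_in_cubic_time alg (@valid1) (@viol1)) /\
  (exists alg : algorithm,
     separates_in_cubic_time alg (@valid2) (@viol2)).
Proof.
split.
  exists alg1, 100%N => R T L Cbar Cund V Vbar x y [[HT HL Hc1 Hc2 HV] [Hb1 Hb2 Hb3]] _.
  rewrite /run /alg1. exact: (alg1_main L Cbar x y HT HV Hb3).
exists alg2, 100%N => R T L Cbar Cund V Vbar x y [[HT HL Hc1 Hc2 HV] [Hb1 Hb2 Hb3]] _.
rewrite /run. exact: (alg2_main L Cbar x y HT HV Hb3).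
Qed.
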